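(* Let $\mathfrak g$ be of type $A_n$. For $s\ge1$, $$\mathbf A_s=\bigl\{\{\alpha_{i_k,j_k}\}_{1\le k\le s}:\ i_k,j_k\in I,\ i_1<i_2<\dots<i_s\le j_1<j_2<\dots<j_s\bigr\}.$$ In particular $\#\mathbf A_s=\binom{n}{2s}+\binom{n}{2s-1}$ for $s\ge1$, and $\sum_{s\ge0}\#\mathbf A_s=2^n$.
   Context: Simple roots $\alpha_1,\dots,\alpha_n$ of $A_n$ numbered as in Bourbaki, $I=\{1,\dots,n\}$; for $i\le j$, $\alpha_{i,j}=\alpha_i+\alpha_{i+1}+\dots+\alpha_j$, so $R^+=\{\alpha_{i,j}:i\le j\}$ and $\theta=\alpha_{1,n}$. Partial order: $\lambda\le\mu$ iff $\mu-\lambda$ is a $\mathbb Z_{\ge0}$-combination of simple roots. An antichain is a subset of $R^+$ of pairwise incomparable elements; $\Phi(A)=\{\alpha\in R^+:\alpha\ge\beta$ for some $\beta\in A\}$; $A$ is abelian if $\beta_1+\beta_2\notin R$ for all $\beta_1,\beta_2\in\Phi(A)$. $\mathbf A_s$ is the set of abelian antichains with $s$ elements, and $\mathbf A_0$ consists of the empty antichain only. Convention: $\binom{m}{k}=0$ if $k>m$. *)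

(* Defs.v *)
(* Root system of type A_n, simple roots indexed 0..n-1 ('I_n)
   (Bourbaki index k+1 corresponds to k here). *)
From HB Require Import structures.
From mathcomp Require Import all_boot all_order all_algebra.
Set Implicit Arguments. Unset Strict Implicit. Unset Printing Implicit Defensive.
Import Order.TTheory GRing.Theory Num.Theory.

(* A positive root alpha_{i,j} (i <= j) is encoded by the pair (i, j). *)
Definition Rplus (n : nat) : {set 'I_n * 'I_n} := [set p : 'I_n * 'I_n | (p.1 <= p.2)%N].

(* coefficient of the simple root alpha_m in alpha_{i,j} *)
Definition coef n (p : 'I_n * 'I_n) (m : 'I_n) : int :=
  ((p.1 <= m)%N && (m <= p.2)%N)%:Z.

(* lambda <= mu iff mu - lambda is a Z_{>=0}-combination of simple roots *)
Definition rle n (p q : 'I_n * 'I_n) : bool :=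
  [forall m, (coef p m <= coef q m)%R].

Definition inR n (v : 'I_n -> int) : bool :=
  [exists p in Rplus n, [forall m, v m == coef p m] || [forall m, v m == (- coef p m)%R]].

Definition antichain n (A : {set 'I_n * 'I_n}) : bool :=
  (A \subset Rplus n) &&
  [forall p in A, forall q in A, (p != q) ==> ~~ rle p q].

Definition Phi n (A : {set 'I_n * 'I_n}) : {set 'I_n * 'I_n} :=
  [set q in Rplus n | [exists p in A, rle p q]].

Definition abelian_ac n (A : {set 'I_n * 'I_n}) : bool :=
  [forall b1 in Phi A, forall b2 in Phi A, ~~ inR (fun m => (coef b1 m + coef b2 m)%R)].

Definition Aset (n s : nat) : {set {set 'I_n * 'I_n}} :=
  [set A | antichain A && abelian_ac A && (#|A| == s)].

(* Main.v *)
Require Import Defs.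
From HB Require Import structures.
From mathcomp Require Import all_boot all_order all_algebra.
From Stdlib Require Import Lia.
Set Implicit Arguments. Unset Strict Implicit. Unset Printing Implicit Defensive.
Set Warnings "-deprecated".

Lemma rleP n (p q : 'I_n * 'I_n) : (p.1 <= p.2)%N ->
  rle p q = (q.1 <= p.1)%N && (p.2 <= q.2)%N.
Proof.
move=> hp; apply/forallP/andP => [H | [h1 h2] m].
  have := H p.1; have := H p.2; rewrite /coef !leqnn hp /= !lez_nat.
  case: (q.1 <= p.2)%N; case: (p.2 <= q.2)%N; case: (q.1 <= p.1)%N; case: (p.1 <= q.2)%N => //.
rewrite /coef lez_nat; case/boolP: ((p.1 <= m)%N && (m <= p.2)%N) => //.
case/andP=> a b; rewrite (leq_trans h1 a) (leq_trans b h2) //.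
Qed.

Lemma notinR n (v : 'I_n -> int) m : v m = Posz 2 -> ~~ inR v.
Proof.
move=> vm; apply/existsP => [[p /andP [_ /orP [/forallP H | /forallP H]]]];
  move: (H m); rewrite vm /coef; by case: (_ && _).
Qed.

Lemma notinR_common n (b1 b2 : 'I_n * 'I_n) (m : 'I_n) :
  (b1.1 <= m <= b1.2)%N -> (b2.1 <= m <= b2.2)%N ->
  ~~ inR (fun m => (coef b1 m + coef b2 m)%R).
Proof. by move=> h1 h2; apply: (@notinR _ _ m); rewrite /coef h1 h2. Qed.


Definition good n s (i j : 'I_s -> 'I_n) :=
  (forall k l : 'I_s, (k < l)%N -> (i k < i l)%N) /\
  (forall k l : 'I_s, (k < l)%N -> (j k < j l)%N) /\
  (forall k l : 'I_s, (i k <= j l)%N).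

Lemma ij_Aset n s (i j : 'I_s -> 'I_n) : good i j ->
  [set (i k, j k) | k : 'I_s] \in Aset n s.
Proof.
move=> [hi [hj hij]].
have inj : injective (fun k => (i k, j k)).
  move=> k l /(congr1 fst) /= H; case: (ltngtP k l) => [H'|H'|H'].
  - by have := hi _ _ H'; rewrite H ltnn.
  - by have := hi _ _ H'; rewrite H ltnn.
  - exact: val_inj.
rewrite inE card_imset // card_ord eqxx andbT; apply/andP; split.
  apply/andP; split.
    by apply/subsetP => p /imsetP [k _ ->]; rewrite inE /=.
  apply/forallP => p; apply/implyP => /imsetP [k _ ->].
  apply/forallP => q; apply/implyP => /imsetP [l _ ->].
  apply/implyP => ne; rewrite rleP //= negb_and -!ltnNge.
  case: (ltngtP k l) => [H|H|H].
  - by rewrite hi.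
  - by rewrite hj ?orbT.
  - by move: ne; rewrite (val_inj H) eqxx.
apply/forallP => b1; apply/implyP; rewrite inE => /andP [b1R /existsP [p /andP [/imsetP [k _ ->] r1]]].
apply/forallP => b2; apply/implyP; rewrite inE => /andP [b2R /existsP [q /andP [/imsetP [l _ ->] r2]]].
move: r1 r2; rewrite !rleP //= => /andP [a1 a2] /andP [c1 c2].
case: (leqP (i k) (i l)) => h.
  apply: (@notinR_common _ _ _ (i l)).
    by rewrite (leq_trans a1 h) (leq_trans (hij l k) a2).
  by rewrite c1 (leq_trans (hij l l) c2).
apply: (@notinR_common _ _ _ (i k)).
  by rewrite a1 (leq_trans (hij k k) a2).
by rewrite (leq_trans c1 (ltnW h)) (leq_trans (hij k l) c2).
Qed.


Lemma Aset_inter n s (A : {set 'I_n * 'I_n}) : A \in Aset n s ->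
  forall p q, p \in A -> q \in A -> (p.1 <= q.2)%N.
Proof.
rewrite inE => /andP [/andP [/andP [sub _] ab] _] p q pA qA.
have pR : (p.1 <= p.2)%N by move: (subsetP sub p pA); rewrite inE.
have qR : (q.1 <= q.2)%N by move: (subsetP sub q qA); rewrite inE.
rewrite leqNgt; apply/negP => lt.
have h2 : (q.2.+1 < n)%N := leq_ltn_trans lt (ltn_ord _).
pose b2 : 'I_n * 'I_n := (Ordinal h2, p.2).
have b2R : (b2.1 <= b2.2)%N by apply: leq_trans lt pR.
have qP : q \in Phi A.
  by rewrite !inE qR /=; apply/existsP; exists q; rewrite qA rleP // !leqnn.
have bP : b2 \in Phi A.
  by rewrite !inE b2R /=; apply/existsP; exists p; rewrite pA rleP //= lt leqnn.
move/forallP: ab => /(_ q); rewrite qP /= => /forallP /(_ b2); rewrite bP /=.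
apply/negP; rewrite negbK; apply/existsP; exists (q.1, p.2).
rewrite inE /= (leq_trans qR (leq_trans (ltnW lt) pR)) /=.
apply/orP; left; apply/forallP => m; rewrite /coef /= -PoszD; apply/eqP; congr Posz.
case: (leqP m q.2) => h /=.
  by rewrite andbT addn0 (leq_trans h (leq_trans (ltnW lt) pR)) andbT.
by rewrite andbF add0n (leq_trans qR (ltnW h)).
Qed.

Lemma Aset_ij n s (x0 : 'I_n) (A : {set 'I_n * 'I_n}) : A \in Aset n s ->
  exists i j : 'I_s -> 'I_n, good i j /\ A = [set (i k, j k) | k : 'I_s].
Proof.
move=> AS; have inter := Aset_inter AS.
move: AS; rewrite inE => /andP [/andP [/andP [sub /forallP nn] _] /eqP cA].
have R p : p \in A -> (p.1 <= p.2)%N by move/(subsetP sub); rewrite inE.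
have nest p q : p \in A -> q \in A -> p != q -> ~~ rle p q.
  by move=> pA qA ne; move: (nn p); rewrite pA => /forallP /(_ q); rewrite qA ne.
have inj1 p q : p \in A -> q \in A -> p.1 = q.1 -> p = q.
  move=> pA qA e; apply/eqP; apply: contraT => ne.
  case: (leqP p.2 q.2) => h.
    by move: (nest _ _ pA qA ne); rewrite rleP ?R // e leqnn h.
  by move: (nest _ _ qA pA); rewrite eq_sym ne rleP ?R // e leqnn (ltnW h) => /(_ isT).
pose X := [set p.1 | p in A].
have cX : #|X| = s by rewrite card_in_imset // => p q pA qA; apply: inj1.
pose u := enum X.
have su : size u = s by rewrite -cardE.
have inc : sorted (relpre val ltn) u.
  rewrite -sorted_map /u -[enum _](eq_filter (mem_enum _)).
  rewrite -(eq_filter (mem_map val_inj _)) -filter_map.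
  by rewrite (sorted_filter ltn_trans) // unlock val_ord_enum iota_ltn_sorted.
pose i (k : 'I_s) := nth x0 u k.
pose j (k : 'I_s) := odflt x0 [pick y : 'I_n | (i k, y) \in A].
have ijA k : (i k, j k) \in A.
  have : i k \in X by rewrite -mem_enum mem_nth // su.
  case/imsetP => p pA e; rewrite /j; case: pickP => [y // | H].
  by move: (H p.2); rewrite e -surjective_pairing pA.
have hi (k l : 'I_s) : (k < l)%N -> (i k < i l)%N.
  move=> kl; have tr : transitive (relpre (@nat_of_ord n) ltn).
    by move=> y x z; apply: ltn_trans.
  by apply: (sorted_ltn_nth tr x0 inc); rewrite ?inE ?su.
exists i, j; split; first split.
- exact: hi.
- split => [k l kl|k l]; last exact: inter (ijA k) (ijA l).
  have ne : (i k, j k) != (i l, j l).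
    by apply/eqP => /(congr1 fst) /= e; move: (hi _ _ kl); rewrite e ltnn.
  move: (nest _ _ (ijA l) (ijA k)); rewrite eq_sym ne rleP ?R //= (ltnW (hi _ _ kl)) /=.
  by rewrite -ltnNge => /(_ isT).
apply/setP => p; apply/idP/imsetP => [pA | [k _ ->] //].
have : p.1 \in u by rewrite mem_enum; apply/imsetP; exists p.
move=> pu; have ix : (index p.1 u < s)%N by rewrite -su index_mem.
exists (Ordinal ix) => //; apply: inj1 => //=.
by rewrite /i /= nth_index.
Qed.


Ltac nlia := intros; try match goal with m := size _ |- _ => rewrite -/m end;
  repeat match goal with H : is_true (leq _ _) |- _ => apply (elimT leP) in H end;
  unfold addn, subn, addn_rec, subn_rec in *;
  try (apply/leP); lia.

Definition G n s (x0 : 'I_n) (t : seq 'I_n) : {set 'I_n * 'I_n} :=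
  [set (nth x0 t k, nth x0 t (k + (size t - s))) | k : 'I_s].

Lemma trO n : transitive (relpre (@nat_of_ord n) ltn).
Proof. by move=> y x z; apply: ltn_trans. Qed.

Lemma G_good n s (x0 : 'I_n) (t : seq 'I_n) : sorted (relpre val ltn) t ->
  (s <= size t)%N -> (size t <= s + s)%N -> (s + s <= (size t).+1)%N ->
  good (fun k : 'I_s => nth x0 t k) (fun k : 'I_s => nth x0 t (k + (size t - s))).
Proof.
move=> st h1 h2 h3; set m := size t in h1 h2 h3 *.
have lt a b : (a < b)%N -> (b < size t)%N -> (nth x0 t a < nth x0 t b)%N.
  by move=> ab bs; apply: (sorted_ltn_nth (@trO n) x0 st) => //; rewrite inE; nlia.
split; [|split].
- move=> k l kl; apply: lt => //; have := ltn_ord l; nlia.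
- move=> k l kl; apply: lt; have := ltn_ord l; nlia.
- move=> k l; have := ltn_ord l; have := ltn_ord k => hk hl.
  case: (ltngtP k (l + (size t - s))) => H.
  + by apply/ltnW/lt => //; nlia.
  + exfalso; nlia.
  + by rewrite H.
Qed.

Lemma G_ends n s (x0 : 'I_n) (t : seq 'I_n) :
  (s <= size t)%N -> (size t <= s + s)%N -> forall x,
  (x \in t) = [exists p in G s x0 t, (p.1 == x) || (p.2 == x)].
Proof.
move=> h1 h2 x; rewrite /G; set m := size t in h1 h2 *; apply/idP/existsP => [xt | [p /andP [/imsetP [k _ ->] /orP [] /eqP <-]]];
  last 2 first.
- by apply: mem_nth; have := ltn_ord k; nlia.
- by apply: mem_nth; have := ltn_ord k; nlia.
have ix := xt; rewrite -index_mem -/m in ix.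
case: (ltnP (index x t) s) => H.
  exists (nth x0 t (Ordinal H), nth x0 t (Ordinal H + (size t - s))).
  by rewrite imset_f //= (nth_index x0 xt) eqxx.
have H' : (index x t - (size t - s) < s)%N by nlia.
exists (nth x0 t (Ordinal H'), nth x0 t (Ordinal H' + (size t - s))).
rewrite imset_f //= subnK ?(nth_index x0 xt) ?eqxx ?orbT //; nlia.
Qed.

Lemma G_inj n s (x0 : 'I_n) (t1 t2 : seq 'I_n) :
  sorted (relpre val ltn) t1 -> sorted (relpre val ltn) t2 ->
  (s <= size t1)%N -> (size t1 <= s + s)%N ->
  (s <= size t2)%N -> (size t2 <= s + s)%N ->
  G s x0 t1 = G s x0 t2 -> t1 = t2.
Proof.
move=> s1 s2 a1 b1 a2 b2 e.
apply: (irr_sorted_eq (@trO n)) => //; first by move=> x; rewrite /= ltnn.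
by move=> x; rewrite (G_ends x0 a1 b1) (G_ends x0 a2 b2) e.
Qed.

Lemma ij_G n s (x0 : 'I_n) (i j : 'I_s -> 'I_n) : (0 < s)%N -> good i j ->
  exists t : seq 'I_n, [/\ sorted (relpre val ltn) t,
     (size t = s.*2 \/ size t = s.*2.-1) &
     [set (i k, j k) | k : 'I_s] = G s x0 t].
Proof.
case: s i j => // s' i j _ [hi [hj hij]].
pose ii r := i (inord r); pose jj r := j (inord r).
have hi' a b : (a < b)%N -> (b <= s')%N -> (ii a < ii b)%N.
  by move=> ab bs; apply: hi; rewrite !inordK //; nlia.
have hj' a b : (a < b)%N -> (b <= s')%N -> (jj a < jj b)%N.
  by move=> ab bs; apply: hj; rewrite !inordK //; nlia.
have im : inord s' = ord_max :> 'I_s'.+1 by apply: val_inj; rewrite /= inordK.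
have i0 : inord 0 = ord0 :> 'I_s'.+1 by apply: val_inj; rewrite /= inordK.
pose b := (i ord_max < j ord0)%N.
pose d := if b then s'.+1 else s'.
pose f r := if (r < s'.+1)%N then ii r else jj (r - d).
pose t := mkseq f (s'.+1 + d).
exists t; split.
- apply/(sortedP x0) => r; rewrite size_mkseq => hr; rewrite !nth_mkseq //; last by nlia.
  rewrite /= /f; case: (ltnP r.+1 s'.+1) => h1.
    by rewrite (ltnW h1) hi'.
  case: (ltnP r s'.+1) => h2.
    have rs : r = s' by nlia.
    rewrite rs /ii im /jj /d; case bb: b.
      by rewrite subnn i0; move: bb; rewrite /b.
    have s1 : (1 <= s')%N by move: hr; rewrite /d bb; nlia.
    have e1 : (s'.+1 - s' = 1)%N by nlia.
    rewrite e1; apply: (leq_ltn_trans (hij _ ord0)).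
    rewrite -i0; apply: hj; rewrite !inordK //.
  apply: hj'; move: hr; rewrite /d; case: ifP => _; nlia.
- rewrite size_mkseq /d; case: ifP => _; [left | right]; rewrite -addnn //; nlia.
- rewrite /G size_mkseq addKn; apply: eq_imset => k /=.
  have kl := ltn_ord k.
  rewrite !nth_mkseq; last 2 first.
  + nlia.
  + rewrite /d; case: ifP => _; nlia.
  rewrite /f kl /ii inord_val; congr pair.
  case: (ltnP (k + d) s'.+1) => h.
    have bb : b = false by apply/negbTE/negP => bT; move: h; rewrite /d bT; nlia.
    have k0 : k = ord0 by apply: val_inj => /=; move: h; rewrite /d bb; nlia.
    rewrite k0 add0n /d bb im; apply/val_inj/eqP; rewrite /= eqn_leq hij andbT leqNgt.
    by move: bb; rewrite /b => ->.
  by rewrite addnK /jj inord_val.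
Qed.


Lemma sum_bin_pairs n N :
  (1 + \sum_(i < N) ('C(n, (i.+1).*2) + 'C(n, (i.+1).*2.-1)) =
  \sum_(k < N.*2.+1) 'C(n, k))%N.
Proof.
elim: N => [|N IH]; first by rewrite big_ord0 big_ord1 bin0.
rewrite big_ord_recr /= addnA IH doubleS [RHS]big_ord_recr /= [in RHS]big_ord_recr /= -addnA.
by congr addn; rewrite addnC.
Qed.

Lemma sum_bin_all n M : (n < M)%N -> (\sum_(k < M) 'C(n, k) = 2 ^ n)%N.
Proof.
move=> nM.
have -> : (2 ^ n = \sum_(k < n.+1) 'C(n, k))%N.
  rewrite -[2]/(1 + 1)%N expnDn; apply: eq_bigr => i _; by rewrite !exp1n !muln1.
rewrite (big_ord_widen _ (fun k => 'C(n, k)) nM) [RHS]big_mkcond /=.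
apply: eq_bigr => i _; case: ifP => // /negbT; rewrite -leqNgt => h.
by rewrite bin_small.
Qed.

Lemma Aset0 n (x0 : 'I_n) : #|Aset n 0| = 1%N.
Proof.
apply/eqP/cards1P; exists set0; apply/setP => A; rewrite in_set1.
apply/idP/eqP => [|->].
  by rewrite inE => /andP [_ /eqP /cards0_eq].
have e : [set (x0, x0) | k : 'I_0] = set0.
  by apply/setP => p; rewrite inE; apply/imsetP => [[[]]].
rewrite -e; apply: (@ij_Aset n 0 (fun _ => x0) (fun _ => x0)).
by split; [|split]; case.
Qed.

Lemma Aset_card n s (x0 : 'I_n) : (0 < s)%N ->
  #|Aset n s| = ('C(n, s.*2) + 'C(n, s.*2.-1))%N.
Proof.
move=> s0.
pose T m := [set t : m.-tuple 'I_n | sorted ltn (map val t)].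
pose F1 := fun t : (s.*2).-tuple 'I_n => G s x0 t.
pose F2 := fun t : (s.*2.-1).-tuple 'I_n => G s x0 t.
have srt m (t : m.-tuple 'I_n) : t \in T m -> sorted (relpre val ltn) t.
  by rewrite inE sorted_map.
have sz1 : (s <= s.*2)%N && (s.*2 <= s + s)%N by rewrite -addnn; apply/andP; split; nlia.
have sz2 : (s <= s.*2.-1)%N && (s.*2.-1 <= s + s)%N by rewrite -addnn; apply/andP; split; nlia.
case/andP: sz1 => a1 b1; case/andP: sz2 => a2 b2.
have E : Aset n s = F1 @: T (s.*2) :|: F2 @: T (s.*2.-1).
  apply/setP => A; apply/idP/idP.
    case/(Aset_ij x0) => i [j [g ->]].
    have [t [st [hs|hs] e]] := ij_G x0 s0 g; rewrite e.
      have ht : size t == s.*2 by rewrite hs.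
      apply/setUP; left; apply/imsetP; exists (Tuple ht) => //.
      by rewrite inE sorted_map.
    have ht : size t == s.*2.-1 by rewrite hs.
    apply/setUP; right; apply/imsetP; exists (Tuple ht) => //.
    by rewrite inE sorted_map.
  case/setUP => /imsetP [t ht ->].
    apply: (ij_Aset (G_good x0 (srt _ _ ht) _ _ _)); rewrite size_tuple //.
    by rewrite -addnn; nlia.
  apply: (ij_Aset (G_good x0 (srt _ _ ht) _ _ _)); rewrite size_tuple //.
  by rewrite -addnn; nlia.
have I : F1 @: T (s.*2) :&: F2 @: T (s.*2.-1) = set0.
  apply/setP => A; rewrite !inE; apply/negP => /andP [/imsetP [t1 h1 ->] /imsetP [t2 h2 e]].
  have := G_inj (srt _ _ h1) (srt _ _ h2); rewrite !size_tuple => /(_ s x0 a1 b1 a2 b2 e).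
  move/(congr1 size); rewrite !size_tuple; nlia.
rewrite E cardsU I cards0 subn0 !card_in_imset ?card_ltn_sorted_tuples //.
  move=> t1 t2 h1 h2 e; apply: val_inj.
  by apply: (G_inj (s:=s) (x0:=x0) (srt _ _ h1) (srt _ _ h2) _ _ _ _ e); rewrite size_tuple.
move=> t1 t2 h1 h2 e; apply: val_inj.
by apply: (G_inj (s:=s) (x0:=x0) (srt _ _ h1) (srt _ _ h2) _ _ _ _ e); rewrite size_tuple.
Qed.


Theorem mainTheorem6 (n : nat) (hn : (0 < n)%N) :
  (forall s : nat, (0 < s)%N ->
     forall A : {set 'I_n * 'I_n},
       A \in Aset n s <->
       exists (i j : 'I_s -> 'I_n),
         (forall k l : 'I_s, (k < l)%N -> (i k < i l)%N) /\
         (forall k l : 'I_s, (k < l)%N -> (j k < j l)%N) /\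
         (forall k l : 'I_s, (i k <= j l)%N) /\
         A = [set (i k, j k) | k : 'I_s]) /\
  (forall s : nat, (0 < s)%N ->
     #|Aset n s| = ('C(n, s.*2) + 'C(n, s.*2.-1))%N) /\
  (\sum_(s < (n * n).+1) #|Aset n s| = 2 ^ n)%N.
Proof.
pose x0 := Ordinal hn.
have P2 : forall s : nat, (0 < s)%N -> #|Aset n s| = ('C(n, s.*2) + 'C(n, s.*2.-1))%N.
  by move=> s s0; apply: Aset_card x0 s0.
split; [|split] => //.
  move=> s s0 A; split.
    case/(Aset_ij x0) => i [j [[a [b c]] ->]]; exists i, j; tauto.
  by case=> i [j [a [b [c ->]]]]; apply: ij_Aset.
rewrite big_ord_recl (Aset0 x0).
have -> : (\sum_(i < n * n) #|Aset n (lift ord0 i)| =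
  \sum_(i < n * n) ('C(n, (i.+1).*2) + 'C(n, (i.+1).*2.-1)))%N.
  by apply: eq_bigr => i _; rewrite lift0 P2.
rewrite sum_bin_pairs sum_bin_all //.
rewrite -addnn ltnS; apply: leq_trans (leq_addr _ _).
by case: n hn x0 P2 => // m _ _ _; rewrite mulSn leq_addr.
Qed.
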